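(* Let $T$ be a finite tree and $G=T^2$ its square. Then $G$ is co-chordal (i.e. its complement $G^c$ is chordal) if and only if $T$ is one of: (i) the path $L_n$ with $2\le n\le 5$; (ii) a star graph; (iii) a (partially) whiskered star.
   Context: All graphs are finite and simple. For a graph $G$, the square $G^2$ is the graph on $V(G)$ whose edges are the pairs $\{x,y\}$ with $x\neq y$ and $\mathrm{dist}_G(x,y)\in\{1,2\}$. $G^c$ is the graph on $V(G)$ whose edges are the non-edges of $G$. A graph is chordal if it has no induced cycle of length $\ge4$. $L_n$ denotes the path on $n$ vertices. A star graph is $K_{1,t}$ ($t\ge1$). A (partially) whiskered star is the tree with vertex set $\{x_0,x_1,\dots,x_n,y_1,\dots,y_m\}$, where $n\ge1$ and $1\le m\le n$, and edge set $\{\{x_0,x_i\}:1\le i\le n\}\cup\{\{x_i,y_i\}:1\le i\le m\}$. *)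

(* Defs.v *)
From mathcomp Require Import all_boot.
Set Implicit Arguments. Unset Strict Implicit. Unset Printing Implicit Defensive.

Section Graphs.
Variable T : finType.

Definition simple_graph (e : rel T) : Prop := symmetric e /\ irreflexive e.

Definition connected (e : rel T) : Prop := forall x y : T, connect e x y.

Definition acyclic (e : rel T) : Prop :=
  forall c : seq T, uniq c -> 3 <= size c -> ~~ cycle e c.

Definition is_tree (e : rel T) : Prop := simple_graph e /\ connected e /\ acyclic e.

Definition square (e : rel T) : rel T :=
  fun x y => (x != y) && (e x y || [exists z, e x z && e z y]).

Definition compl (h : rel T) : rel T := fun x y => (x != y) && ~~ h x y.

Definition induced_cycle (h : rel T) (x0 : T) (c : seq T) : Prop :=
  [/\ uniq c, 4 <= size c &
   forall i j, i < size c -> j < size c ->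
     h (nth x0 c i) (nth x0 c j) =
     (j == (i + 1) %% size c) || (i == (j + 1) %% size c)].

Definition chordal (h : rel T) : Prop :=
  forall (x0 : T) (c : seq T), ~ induced_cycle h x0 c.

End Graphs.

Definition isomorphic (T U : finType) (e : rel T) (f : rel U) : Prop :=
  exists phi : T -> U, bijective phi /\ forall x y, e x y = f (phi x) (phi y).

Definition path_graph (n : nat) : rel 'I_n :=
  fun i j => (i.+1 == j :> nat) || (j.+1 == i :> nat).

Definition star_graph (t : nat) : rel (option 'I_t) :=
  fun a b => match a, b with
             | None, Some _ | Some _, None => true
             | _, _ => false
             end.

(* (partially) whiskered star: x_0 = None, x_i = Some (inl (i-1)) for 1<=i<=n,
   y_i = Some (inr (i-1)) for 1<=i<=m; edges x0--x_i and x_i--y_i. *)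
Definition wstar_graph (n m : nat) : rel (option ('I_n + 'I_m)) :=
  fun a b => match a, b with
             | None, Some (inl _) | Some (inl _), None => true
             | Some (inl i), Some (inr j) | Some (inr j), Some (inl i) =>
                 (val i == val j)
             | _, _ => false
             end.

Arguments path_graph n : clear implicits.
Arguments star_graph t : clear implicits.
Arguments wstar_graph n m : clear implicits.

(* Main.v *)
Require Import Defs.
From mathcomp Require Import all_boot zify.
Set Implicit Arguments. Unset Strict Implicit. Unset Printing Implicit Defensive.

Lemma split_chordal (T:finType) (h : rel T) (P : pred T) :
  (forall x y, h x y -> P x || P y) ->
  (forall x y, P x -> P y -> x != y -> h x y) -> chordal h.
Proof.
move=> H1 H2 x0 c [Hu Hs Hc].
have [k Hk] : exists k, size c = k.+4.
  by case: (size c) Hs => [|[|[|[|k]]]] // _; exists k.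
rewrite Hk in Hc.
set f := nth x0 c.
have Hm : forall i, i < k.+3 -> (i + 1) %% k.+4 = i.+1.
  by move=> i Hi; rewrite addn1 modn_small.
have E01 : h (f 0) (f 1) by rewrite Hc // Hm.
have E12 : h (f 1) (f 2) by rewrite Hc // Hm.
have E23 : h (f 2) (f 3) by rewrite Hc // Hm.
have N02 : ~~ h (f 0) (f 2) by rewrite Hc // !Hm.
have N13 : ~~ h (f 1) (f 3).
  rewrite Hc // Hm //; case: (ltnP 3 k.+3) => H3; first by rewrite Hm.
  have -> : k = 0 by lia.
  by [].
have Elast : h (f k.+3) (f 0) by rewrite Hc // addn1 modnn.
have Nlast : ~~ h (f k.+3) (f 1) by rewrite Hc // addn1 modnn Hm.
have Dist : forall i j, i < k.+4 -> j < k.+4 -> i != j -> f i != f j.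
  by move=> i j Hi Hj; rewrite /f nth_uniq // Hk.
have P1 : P (f 1).
  apply/negPn/negP => nP1.
  have := H1 _ _ E01; rewrite (negbTE nP1) orbF => P0.
  have := H1 _ _ E12; rewrite (negbTE nP1) /= => P2.
  by move: N02; rewrite H2 // Dist.
have P2 : P (f 2).
  apply/negPn/negP => nP2.
  have := H1 _ _ E12; rewrite (negbTE nP2) orbF => _.
  have := H1 _ _ E23; rewrite (negbTE nP2) /= => P3.
  by move: N13; rewrite H2 // Dist.
have nP0 : ~~ P (f 0).
  by apply/negP => P0; move: N02; rewrite H2 // Dist.
have := H1 _ _ Elast; rewrite (negbTE nP0) orbF => Pl.
by move: Nlast; rewrite H2 // Dist.
Qed.

Lemma far_iso (T U : finType) (e : rel T) (f : rel U) (phi : T -> U) :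
  bijective phi -> (forall x y, e x y = f (phi x) (phi y)) ->
  forall x y, compl (square e) x y = compl (square f) (phi x) (phi y).
Proof.
case=> psi K1 K2 He x y.
rewrite /compl /square (inj_eq (can_inj K1)) He.
congr (_ && ~~ (_ && (_ || _))).
apply/existsP/existsP => [[z Hz]|[w Hw]].
  by exists (phi z); rewrite -!He.
by exists (psi w); rewrite !He K2.
Qed.

Lemma chordal_iso (T U : finType) (e : rel T) (f : rel U) (P : pred U) :
  isomorphic e f ->
  (forall x y, compl (square f) x y -> P x || P y) ->
  (forall x y, P x -> P y -> x != y -> compl (square f) x y) ->
  chordal (compl (square e)).
Proof.
case=> phi [Hb He] H1 H2.
have Hinj := bij_inj Hb.
apply: (@split_chordal _ _ (fun x => P (phi x))) => x y.
  by rewrite (far_iso Hb He); apply: H1.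
move=> Px Py Hxy; rewrite (far_iso Hb He); apply: H2 => //.
by rewrite (inj_eq Hinj).
Qed.

Lemma star_far t (a b : option 'I_t) : compl (square (star_graph t)) a b = false.
Proof.
rewrite /compl /square.
case: a => [i|]; case: b => [j|] //=; case: eqP => //= _.
by apply/negbF/existsP; exists None.
Qed.

Lemma wstar_split1 n m (a b : option ('I_n + 'I_m)) :
  compl (square (wstar_graph n m)) a b ->
  (if a is Some (inr _) then true else false) || (if b is Some (inr _) then true else false).
Proof.
rewrite /compl /square; case: eqP => //= Hab.
case: a Hab => [[i|i]|]; case: b => [[j|j]|] //= Hab;
by move/negP => H; exfalso; apply: H; apply/existsP; exists None.
Qed.

Lemma wstar_split2 n m (a b : option ('I_n + 'I_m)) :
  (if a is Some (inr _) then true else false) -> (if b is Some (inr _) then true else false) ->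
  a != b -> compl (square (wstar_graph n m)) a b.
Proof.
case: a => [[i|i]|] //; case: b => [[j|j]|] //= _ _ Hij.
rewrite /compl /square Hij /=.
apply/existsP => [[[[k|k]|] //=]] /andP[/eqP H1 /eqP H2].
have Eij : i = j by apply: val_inj; rewrite /= -H1 H2.
by move: Hij; rewrite Eij eqxx.
Qed.


Lemma path_sq n (x y : 'I_n) : x != y ->
  [exists z, path_graph n x z && path_graph n z y] = (x.+2 == y :> nat) || (y.+2 == x :> nat).
Proof.
move=> Hxy; apply/existsP/orP => [[z /andP[]]|].
  rewrite /path_graph => /orP[] /eqP H1 /orP[] /eqP H2.
  - by left; apply/eqP; lia.
  - have : x = y :> nat by lia. by move/val_inj=> E; move: Hxy; rewrite E eqxx.
  - have : x = y :> nat by lia. by move/val_inj=> E; move: Hxy; rewrite E eqxx.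
  - by right; apply/eqP; lia.
case=> /eqP H.
  have Hz : x.+1 < n by have := ltn_ord y; lia.
  by exists (Ordinal Hz); rewrite /path_graph /= H !eqxx.
have Hz : y.+1 < n by have := ltn_ord x; lia.
by exists (Ordinal Hz); rewrite /path_graph /= H !eqxx orbT.
Qed.

Lemma path_split n : 2 <= n <= 5 -> exists P : pred 'I_n,
  (forall x y, compl (square (path_graph n)) x y -> P x || P y) /\
  (forall x y, P x -> P y -> x != y -> compl (square (path_graph n)) x y).
Proof.
case/andP; case: n => [|[|[|[|[|[|n]]]]]] // _ _.
- exists pred0; split => // x y.
  by rewrite /compl /square; case: (eqVneq x y) => [->|Hxy]; rewrite ?eqxx ?andbF //= path_sq //; case: x Hxy => [[|[|x]] Hx]; case: y => [[|[|y]] Hy].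
- exists pred0; split => // x y.
  by rewrite /compl /square; case: (eqVneq x y) => [->|Hxy]; rewrite ?eqxx ?andbF //= path_sq //; case: x Hxy => [[|[|[|x]]] Hx]; case: y => [[|[|[|y]]] Hy].
- exists (fun i : 'I_4 => val i == 0); split => x y;
  rewrite /compl /square; case: (eqVneq x y) => [->|Hxy]; rewrite ?eqxx ?andbF //= path_sq //; 
  by case: x Hxy => [[|[|[|[|x]]]] Hx]; case: y => [[|[|[|[|y]]]] Hy].
- exists (fun i : 'I_5 => (val i == 0) || (val i == 4)); split => x y;
  rewrite /compl /square; case: (eqVneq x y) => [->|Hxy]; rewrite ?eqxx ?andbF //= path_sq //;
  by case: x Hxy => [[|[|[|[|[|x]]]]] Hx]; case: y => [[|[|[|[|[|y]]]]] Hy].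
Qed.

Section Tree.
Variable V : finType.
Variable e : rel V.
Hypothesis esym : symmetric e.
Hypothesis eirr : irreflexive e.
Hypothesis eacyc : acyclic e.

Local Notation far := (compl (square e)).

Lemma acyc_false c : uniq c -> 3 <= size c -> cycle e c -> False.
Proof. by move=> Hu Hs Hc; move: (eacyc Hu Hs); rewrite Hc. Qed.

Lemma chord x s z : path e x s -> uniq (x :: s) -> z \in s -> z != head x s -> e x z -> False.
Proof.
move=> Hp Hu Hz Hh Hxz.
case/splitPr: Hz Hp Hu Hh => s1 s2 Hp Hu Hh.
have Hu' : uniq (x :: rcons s1 z).
  move: Hu; rewrite (_ : x :: s1 ++ z :: s2 = (x :: rcons s1 z) ++ s2); last by rewrite /= cat_rcons.
  by rewrite cat_uniq => /andP[].
case: s1 Hp Hu Hh Hu' => [|a s1] Hp Hu Hh Hu'; first by rewrite /= eqxx in Hh.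
apply: (acyc_false Hu'); first by rewrite /= size_rcons.
rewrite /cycle rcons_path; apply/andP; split; last by rewrite last_rcons esym.
by move: Hp; rewrite -cat_rcons cat_path => /andP[].
Qed.

Lemma uniq_cons y x a s : path e x (a :: s) -> uniq (x :: a :: s) -> e y x -> y != a ->
  uniq (y :: x :: a :: s).
Proof.
move=> Hp Hu Hyx Hya.
rewrite cons_uniq Hu andbT inE negb_or; apply/andP; split.
  by apply/eqP => E; move: Hyx; rewrite E eirr.
apply/negP => Hy; apply: (chord Hp Hu Hy) => //.
by rewrite esym.
Qed.

Lemma far_path x s : path e x s -> uniq (x :: s) -> 3 <= size s -> far x (last x s).
Proof.
case: s => [|a [|b [|c s]]] // Hp Hu _.
have -> : last x [:: a, b, c & s] = last c s by [].
set l := last c s.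
have Hl : l \in [:: c & s] by exact: mem_last.
have Hlbs : l \in [:: b, c & s] by rewrite in_cons Hl orbT.
have Hls : l \in [:: a, b, c & s] by rewrite in_cons Hlbs orbT.
have Ha : a \notin [:: b, c & s] by move: Hu; rewrite !cons_uniq => /andP[_ /andP[]].
have Hb : b \notin [:: c & s] by move: Hu; rewrite !cons_uniq => /and3P[_ _ /andP[]].
have Hxl : x != l.
  by apply/eqP => E; move: Hu; rewrite cons_uniq E Hls.
rewrite /compl /square Hxl /=; apply/negP => /orP[Hxl'|/existsP[z /andP[H1 H2]]].
  apply: (chord Hp Hu Hls _ Hxl').
  by apply/eqP => /= E; move: Ha; rewrite -E Hlbs.
case Hz : (z \in [:: x, a, b, c & s]).
  move: Hz; rewrite inE => /orP[/eqP E|Hz]; first by move: H1; rewrite E eirr.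
  case: (eqVneq z a) => [E|Hza]; last by apply: (chord Hp Hu Hz Hza H1).
  move: Hp Hu; rewrite [path _ x _]/= cons_uniq => /andP[_ Hp] /andP[_ Hu].
  have Hal : e a l by rewrite -E.
  apply: (chord (Hp : path e a [:: b, c & s]) Hu Hlbs _ Hal).
  by apply/eqP => /= E'; move: Hb; rewrite -E' Hl.
have Hu' : uniq (x :: rcons [:: a, b, c & s] z).
  by rewrite -cats1 -cat_cons cat_uniq Hu /= andbT Hz.
apply: (acyc_false Hu'); first by rewrite /= size_rcons.
rewrite /cycle rcons_path rcons_path Hp /= last_rcons.
by apply/andP; split; rewrite esym.
Qed.

Lemma far_sym x y : far x y = far y x.
Proof.
rewrite /compl /square eq_sym esym; congr (_ && ~~ (_ && (_ || _))).
by apply/existsP/existsP => [[z /andP[H1 H2]]|[z /andP[H1 H2]]]; exists z; rewrite esym H2 esym H1.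
Qed.

Lemma farxx x : far x x = false.
Proof. by rewrite /compl eqxx. Qed.

Lemma far_neq x y : far x y -> x != y.
Proof. by case/andP. Qed.

Lemma C4 a b c d : far a b -> far b c -> far c d -> far d a -> ~~ far a c -> ~~ far b d ->
  a != c -> b != d -> ~ chordal far.
Proof.
move=> ab bc cd da ac bd nac nbd Hch; apply: (Hch a [:: a; b; c; d]).
have ba : far b a by rewrite far_sym.
have cb : far c b by rewrite far_sym.
have dc : far d c by rewrite far_sym.
have ad : far a d by rewrite far_sym.
have ca : far c a = false by rewrite far_sym; apply/negbTE.
have db : far d b = false by rewrite far_sym; apply/negbTE.
split => //.
  rewrite /= !inE !negb_or (far_neq ab) (far_neq bc) (far_neq cd) nac nbd /= andbT.
  by rewrite eq_sym (far_neq da).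
move=> i j Hi Hj.
case: i Hi => [|[|[|[|i]]]] Hi //; case: j Hj => [|[|[|[|j]]]] Hj //;
  by rewrite /= ?farxx ?ab ?bc ?cd ?da ?ba ?cb ?dc ?ad ?ca ?db ?(negbTE ac) ?(negbTE bd).
Qed.


Lemma adj_nfar a b : e a b -> ~~ far a b.
Proof. by move=> H; apply/negP => /andP[Hab /negP]; apply; rewrite /square Hab H. Qed.

Lemma com_nfar a z b : e a z -> e z b -> ~~ far a b.
Proof.
move=> H1 H2; apply/negP => /andP[Hab /negP]; apply; rewrite /square Hab /=.
by apply/orP; right; apply/existsP; exists z; rewrite H1 H2.
Qed.

Lemma nfarP a b : ~~ far a b -> [\/ a = b, e a b | exists z, e a z /\ e z b].
Proof.
move=> H; case: (eqVneq a b) => [->|Hab]; first by constructor 1.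
move: H; rewrite /compl /square Hab /= negbK => /orP[H|/existsP[z /andP[H1 H2]]].
  by constructor 2.
by constructor 3; exists z.
Qed.

Lemma uniq2 a b : e a b -> uniq [:: a; b].
Proof. by move=> H; rewrite /= inE andbT; apply/eqP => E; move: H; rewrite E eirr. Qed.

Lemma uniq3 a b c : e a b -> e b c -> a != c -> uniq [:: a; b; c].
Proof.
move=> H1 H2 H3; apply: (uniq_cons (x:=b) (a:=c) (s:=[::])) => //.
  by rewrite /= H2.
exact: uniq2.
Qed.

Lemma uniq4 a b c d : e a b -> e b c -> e c d -> a != c -> b != d -> uniq [:: a; b; c; d].
Proof.
move=> H1 H2 H3 H4 H5; apply: (uniq_cons (x:=b) (a:=c) (s:=[:: d])) => //.
  by rewrite /= H2 H3.
exact: uniq3.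
Qed.

Lemma uniq5 a b c d f : e a b -> e b c -> e c d -> e d f -> a != c -> b != d -> c != f ->
  uniq [:: a; b; c; d; f].
Proof.
move=> H1 H2 H3 H4 H5 H6 H7; apply: (uniq_cons (x:=b) (a:=c) (s:=[:: d; f])) => //.
  by rewrite /= H2 H3 H4.
exact: uniq4.
Qed.

Lemma uniq6 a b c d f g : e a b -> e b c -> e c d -> e d f -> e f g ->
  a != c -> b != d -> c != f -> d != g -> uniq [:: a; b; c; d; f; g].
Proof.
move=> H1 H2 H3 H4 H5 H6 H7 H8 H9; apply: (uniq_cons (x:=b) (a:=c) (s:=[:: d; f; g])) => //.
  by rewrite /= H2 H3 H4 H5.
exact: uniq5.
Qed.

Lemma far3 a b c d : e a b -> e b c -> e c d -> a != c -> b != d -> far a d.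
Proof.
move=> H1 H2 H3 H4 H5.
apply: (far_path (x:=a) (s:=[:: b; c; d])) => //; first by rewrite /= H1 H2 H3.
exact: uniq4.
Qed.

Lemma far4 a b c d f : e a b -> e b c -> e c d -> e d f -> a != c -> b != d -> c != f -> far a f.
Proof.
move=> H1 H2 H3 H4 H5 H6 H7.
apply: (far_path (x:=a) (s:=[:: b; c; d; f])) => //; first by rewrite /= H1 H2 H3 H4.
exact: uniq5.
Qed.

Lemma far5 a b c d f g : e a b -> e b c -> e c d -> e d f -> e f g ->
  a != c -> b != d -> c != f -> d != g -> far a g.
Proof.
move=> H1 H2 H3 H4 H5 H6 H7 H8 H9.
apply: (far_path (x:=a) (s:=[:: b; c; d; f; g])) => //; first by rewrite /= H1 H2 H3 H4 H5.
exact: uniq6.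
Qed.

Lemma neq_of_e a b : e a b -> a != b.
Proof. by move=> H; apply/eqP => E; move: H; rewrite E eirr. Qed.

Lemma noTri a b c : e a b -> e b c -> e c a -> False.
Proof.
move=> H1 H2 H3.
have Hac : a != c by rewrite eq_sym; apply: neq_of_e.
have U := uniq3 H1 H2 Hac.
apply: (chord (x:=a) (s:=[:: b; c]) (z:=c)) => //.
- by rewrite /= H1 H2.
- by rewrite !inE eqxx orbT.
- by rewrite /= eq_sym neq_of_e.
- by rewrite esym.
Qed.

Lemma noSq a b c d : e a b -> e b c -> e c d -> e d a -> a != c -> b != d -> False.
Proof.
move=> H1 H2 H3 H4 H5 H6.
have U := uniq4 H1 H2 H3 H5 H6.
apply: (chord (x:=a) (s:=[:: b; c; d]) (z:=d)) => //.
- by rewrite /= H1 H2 H3.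
- by rewrite !inE eqxx !orbT.
- by rewrite /= eq_sym.
- by rewrite esym.
Qed.

Hypothesis Hch : chordal far.

Lemma noL6 y x c q1 q2 q3 : e y x -> e x c -> e c q1 -> e q1 q2 -> e q2 q3 ->
  y != c -> x != q1 -> c != q2 -> q1 != q3 -> False.
Proof.
move=> H1 H2 H3 H4 H5 N1 N2 N3 N4.
apply: (C4 (a:=y) (b:=q2) (c:=x) (d:=q3)) Hch.
- exact: (far4 H1 H2 H3 H4 N1 N2 N3).
- by rewrite far_sym; apply: (far3 H2 H3 H4 N2 N3).
- exact: (far4 H2 H3 H4 H5 N2 N3 N4).
- by rewrite far_sym; apply: (far5 H1 H2 H3 H4 H5 N1 N2 N3 N4).
- exact: adj_nfar.
- exact: adj_nfar.
- exact: neq_of_e.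
- exact: neq_of_e.
Qed.

Lemma confC c x y y' z v : e c x -> e x y -> e x y' -> y != c -> y' != c -> y != y' ->
  e c z -> z != x -> e z v -> v != c -> False.
Proof.
move=> H1 H2 H3 N1 N2 N3 H4 N4 H5 N5.
have H2' : e y x by rewrite esym.
have H3' : e y' x by rewrite esym.
have H1' : e x c by rewrite esym.
have N4' : x != z by rewrite eq_sym.
have N5' : c != v by rewrite eq_sym.
apply: (C4 (a:=y) (b:=v) (c:=y') (d:=z)) Hch.
- exact: (far4 H2' H1' H4 H5).
- by rewrite far_sym; apply: (far4 H3' H1' H4 H5).
- exact: (far3 H3' H1' H4).
- by rewrite far_sym; apply: (far3 H2' H1' H4).
- exact: (com_nfar H2' H3).
- by apply: adj_nfar; rewrite esym.
- done.
- by rewrite eq_sym neq_of_e.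
Qed.

Lemma confB c x y y' a b : e c x -> e x y -> e x y' -> y != c -> y' != c -> y != y' ->
  e c a -> e c b -> a != x -> b != x -> a != b -> False.
Proof.
move=> H1 H2 H3 N1 N2 N3 H4 H5 N4 N5 N6.
have H2' : e y x by rewrite esym.
have H3' : e y' x by rewrite esym.
have H1' : e x c by rewrite esym.
have N4' : x != a by rewrite eq_sym.
have N5' : x != b by rewrite eq_sym.
apply: (C4 (a:=y) (b:=a) (c:=y') (d:=b)) Hch.
- exact: (far3 H2' H1' H4).
- by rewrite far_sym; apply: (far3 H3' H1' H4).
- exact: (far3 H3' H1' H5).
- by rewrite far_sym; apply: (far3 H2' H1' H5).
- exact: (com_nfar H2' H3).
- by apply: (com_nfar (z:=c)); rewrite // esym.
- done.
- done.
Qed.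

Definition ball c := [set v | ~~ far c v].

Lemma cov_exists (v0 : V) : connected e -> exists c, forall v, ~~ far c v.
Proof.
move=> Hconn.
case: (@arg_maxnP V v0 predT (fun c => #|ball c|) isT) => c _ Hmax.
exists c => w; apply/negP => Hw.
case/connectP: (Hconn c w) => p Hp Hl.
rewrite Hl {Hl w} in Hw.
case/shortenP: Hp Hw => p' Hp' Hu' _ Hw.
case: p' Hp' Hu' Hw => [|q1 [|q2 [|q3 r]]] Hp' Hu' Hw.
- by rewrite /= farxx in Hw.
- by move: Hw; rewrite /= (negbTE (adj_nfar (_ : e c q1))) //; move: Hp' => /= /andP[].
- move: Hp' => /= /and3P[H1 H2 _].
  by move: Hw; rewrite /= (negbTE (com_nfar H1 H2)).
move: Hp' => /= /and4P[H1 H2 H3 _].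
have Ncq2 : c != q2.
  by apply/eqP => E; move: Hu'; rewrite E /= !inE eqxx !orbT.
have Nq1q3 : q1 != q3.
  by apply/eqP => E; move: Hu'; rewrite E /= !inE eqxx !orbT andbF.
have A : forall x y, e c x -> x != q1 -> e x y -> y != c -> False.
  move=> x y Hx Nx Hy Ny.
  by apply: (noL6 (y:=y) (x:=x) (c:=c) (q1:=q1) (q2:=q2) (q3:=q3)); rewrite // esym.
have : #|ball c| < #|ball q1|.
  apply: proper_card; apply/properP; split.
    apply/subsetP => v; rewrite !inE => /nfarP[<-|Hv|[z [Hz1 Hz2]]].
    - by apply: adj_nfar; rewrite esym.
    - case: (eqVneq v q1) => [->|Nv]; first by rewrite farxx.
      by apply: (com_nfar (z:=c)); rewrite // esym.
    - case: (eqVneq z q1) => [Ez|Nz]; first by apply: adj_nfar; rewrite -Ez.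
      case: (eqVneq v c) => [->|Nv]; first by apply: adj_nfar; rewrite esym.
      by case: (A z v).
  exists q3; rewrite !inE ?negbK.
    exact: (com_nfar H2 H3).
  exact: (far3 H1 H2 H3).
by move=> H; move: (Hmax q1 isT); rewrite /= leqNgt H.
Qed.

Lemma good_exists c : (forall v, ~~ far c v) -> exists g, (forall v, ~~ far g v) /\
   (forall x y y', e g x -> e x y -> e x y' -> y != g -> y' != g -> y = y').
Proof.
move=> Hc.
case: (boolP [forall x, forall y, forall y', e c x ==> e x y ==> e x y' ==> (y != c) ==> (y' != c) ==> (y == y')]) => [H|].
  exists c; split => // x y y' H1 H2 H3 N1 N2; apply/eqP.
  by move/forallP: H => /(_ x)/forallP/(_ y)/forallP/(_ y'); rewrite H1 H2 H3 N1 N2.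
rewrite negb_forall => /existsP[x]; rewrite negb_forall => /existsP[y].
rewrite negb_forall => /existsP[y'].
rewrite !negb_imply => /andP[H1 /andP[H2 /andP[H3 /andP[N1 /andP[N2 N3]]]]].
exists x; split.
  move=> v; case/nfarP: (Hc v) => [<-|Hv|[z [Hz1 Hz2]]].
  - by apply: adj_nfar; rewrite esym.
  - by apply: (com_nfar (z:=c)); rewrite // esym.
  - case: (eqVneq z x) => [Ez|Nz]; first by apply: adj_nfar; rewrite -Ez.
    case: (eqVneq v c) => [->|Nv]; first by apply: adj_nfar; rewrite esym.
    by case: (confC H1 H2 H3 N1 N2 N3 Hz1 Nz Hz2 Nv).
move=> u a b Hu Ha Hb Na Nb.
case: (eqVneq u c) => [Eu|Nu].
  rewrite Eu in Ha Hb; case: (eqVneq a b) => // Nab.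
  by case: (confB H1 H2 H3 N1 N2 N3 Ha Hb Na Nb Nab).
exfalso; move: (Hc a); rewrite (far3 H1 Hu Ha) //.
- by rewrite eq_sym.
- by rewrite eq_sym.
Qed.

Lemma star_build c : (forall v, (v == c) || e c v) -> (exists v, v != c) ->
  exists t, 1 <= t /\ isomorphic e (star_graph t).
Proof.
move=> Hall [v0 Hv0].
pose s := enum [set x | e c x].
have Hs : forall x, (x \in s) = e c x by move=> x; rewrite mem_enum inE.
have Us : uniq s := enum_uniq _.
have [t Ht] : exists t, size s = t.+1.
  case Es: (size s) => [|t]; last by exists t.
  move: (Hall v0); rewrite (negbTE Hv0) /= -Hs => Hin.
  by move/eqP: Es; rewrite size_eq0 => /eqP Es; rewrite Es in Hin.
exists t.+1; split => //.
pose phi v : option 'I_t.+1 := if v == c then None else Some (inord (index v s)).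
pose psi (o : option 'I_t.+1) := if o is Some i then nth c s i else c.
exists phi; split.
  exists psi.
  - move=> v; rewrite /phi /psi; case: eqP => [->|Nv] //.
    have Hv : v \in s by rewrite Hs; move: (Hall v); case: eqP.
    by rewrite inordK ?nth_index // -Ht index_mem.
  - case => [i|] /=; last by rewrite /phi eqxx.
    have Hi : i < size s by rewrite Ht.
    have Hn : nth c s i \in s := mem_nth c Hi.
    rewrite /phi; case: eqP => [E|_]; first by move: Hn; rewrite Hs E eirr.
    by rewrite index_uniq // inord_val.
move=> x y; rewrite /phi.
case: (eqVneq x c) => [->|Nx]; case: (eqVneq y c) => [->|Ny] /=.
- by rewrite eirr.
- by move: (Hall y); rewrite (negbTE Ny).
- by move: (Hall x); rewrite (negbTE Nx) /= esym.
- apply/negbTE/negP => Hxy.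
  move: (Hall x) (Hall y); rewrite (negbTE Nx) (negbTE Ny) /= => H1 H2.
  by apply: (noTri H1 Hxy); rewrite esym.
Qed.

Lemma noPent a b c d f : e a b -> e b c -> e c d -> e d f -> e f a ->
  a != c -> b != d -> c != f -> False.
Proof.
move=> H1 H2 H3 H4 H5 N1 N2 N3.
have U := uniq5 H1 H2 H3 H4 N1 N2 N3.
apply: (chord (x:=a) (s:=[:: b; c; d; f]) (z:=f)) => //.
- by rewrite /= H1 H2 H3 H4.
- by rewrite !inE eqxx !orbT.
- by apply/eqP => /= E; move: U; rewrite E /= !inE eqxx !orbT /= andbF.
- by rewrite esym.
Qed.

Lemma index_eq (T : eqType) (s : seq T) x y : x \in s -> y \in s ->
  (index x s == index y s) = (x == y).
Proof.
move=> Hx Hy; apply/eqP/eqP => [E|->] //.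
by rewrite -(nth_index x Hx) E nth_index.
Qed.

Lemma wstar_build c : (forall v, ~~ far c v) ->
  (forall x y y', e c x -> e x y -> e x y' -> y != c -> y' != c -> y = y') ->
  (exists w, (w != c) && ~~ e c w) ->
  exists n m, [/\ 1 <= n, 1 <= m, m <= n & isomorphic e (wstar_graph n m)].
Proof.
move=> Hcov Hgood [w /andP[Nw Hw]].
have Ypar : forall v, v != c -> ~~ e c v -> exists z, e c z && e z v.
  move=> v Nv Hv; case/nfarP: (Hcov v) => [E|H|[z [H1 H2]]].
  - by move: Nv; rewrite E eqxx.
  - by rewrite H in Hv.
  - by exists z; rewrite H1 H2.
pose par v := odflt c [pick x | e c x && e x v].
have parP : forall v, v != c -> ~~ e c v -> e c (par v) && e (par v) v.
  move=> v Nv Hv; rewrite /par; case: pickP => [x Hx|H] //=.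
  by case: (Ypar v Nv Hv) => z Hz; move: (H z); rewrite Hz.
have parU : forall v p, v != c -> ~~ e c v -> e c p -> e p v -> p = par v.
  move=> v p Nv Hv Hp Hpv; case/andP: (parP v Nv Hv) => H1 H2.
  case: (eqVneq p (par v)) => // Np; exfalso.
  have H2' : e v (par v) by rewrite esym.
  have H1' : e (par v) c by rewrite esym.
  by apply: (noSq Hp Hpv H2' H1' _ Np); rewrite eq_sym.
pose Xw := [set x | e c x & [exists y, e x y && (y != c)]].
pose X := [set x | e c x].
pose s := enum Xw ++ enum (X :\: Xw).
have Hs : forall x, (x \in s) = e c x.
  by move=> x; rewrite mem_cat !mem_enum !inE; case: (e c x) => //=; rewrite andbT orbN.
have Us : uniq s.
  rewrite cat_uniq !enum_uniq /= andbT; apply/hasPn => x.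
  by rewrite !mem_enum !inE => /andP[H _].
pose m0 := size (enum Xw).
have HXw : forall x, (x \in enum Xw) = e c x && [exists y, e x y && (y != c)].
  by move=> x; rewrite mem_enum inE.
have idxXw : forall x, x \in enum Xw -> index x s < m0.
  by move=> x Hx; rewrite index_cat Hx index_mem.
have nthXw : forall j, j < m0 -> nth c s j \in enum Xw.
  by move=> j Hj; rewrite nth_cat Hj mem_nth.
pose child x := odflt c [pick y | e x y && (y != c)].
have childP : forall x, [exists y, e x y && (y != c)] -> e x (child x) && (child x != c).
  move=> x /existsP[y Hy]; rewrite /child; case: pickP => [z Hz|H] //=.
  by move: (H y); rewrite Hy.
have childY : forall x, e c x -> e x (child x) -> ~~ e c (child x).
  by move=> x H1 H2; apply/negP => H3; apply: (noTri H1 H2); rewrite esym.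
have parchild : forall x, x \in enum Xw -> par (child x) = x.
  move=> x; rewrite HXw => /andP[H1 H2]; case/andP: (childP x H2) => H3 H4.
  by symmetry; apply: parU => //; apply: childY.
have childpar : forall v, v != c -> ~~ e c v -> child (par v) = v.
  move=> v Nv Hv; case/andP: (parP v Nv Hv) => H1 H2.
  have Hex : [exists y, e (par v) y && (y != c)] by apply/existsP; exists v; rewrite H2.
  case/andP: (childP _ Hex) => H3 H4.
  exact: (Hgood _ _ _ H1 H3 H2 H4 Nv).
have Hwp : par w \in enum Xw.
  case/andP: (parP w Nw Hw) => H1 H2.
  by rewrite HXw H1 /=; apply/existsP; exists w; rewrite H2.
have [m' Hm] : exists m', m0 = m'.+1.
  case Em: m0 => [|m']; last by exists m'.
  by move: (idxXw _ Hwp); rewrite Em.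
have Hms : m0 <= size s by rewrite size_cat leq_addr.
have [n' Hn] : exists n', size s = n'.+1.
  case En: (size s) => [|n']; last by exists n'.
  by move: Hms; rewrite En Hm.
exists n'.+1, m'.+1; split => //; first by rewrite -Hm -Hn.
pose phi v : option ('I_n'.+1 + 'I_m'.+1) :=
  if v == c then None else if e c v then Some (inl (inord (index v s)))
  else Some (inr (inord (index (par v) s))).
pose psi (o : option ('I_n'.+1 + 'I_m'.+1)) :=
  match o with None => c | Some (inl i) => nth c s i | Some (inr j) => child (nth c s j) end.
have parS : forall v, v != c -> ~~ e c v -> par v \in enum Xw.
  move=> v Nv Hv; case/andP: (parP v Nv Hv) => H1 H2.
  by rewrite HXw H1 /=; apply/existsP; exists v; rewrite H2.
have EXws : forall x, x \in enum Xw -> x \in s by move=> x Hx; rewrite mem_cat Hx.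
exists phi; split.
  exists psi.
  - move=> v; rewrite /phi /psi; case: eqP => [->|/eqP Nv] //.
    case Hv: (e c v).
      have Hv' : v \in s by rewrite Hs.
      by rewrite inordK ?nth_index // -Hn index_mem.
    have Hv' : ~~ e c v by rewrite Hv.
    rewrite inordK; last by rewrite -Hm idxXw // parS.
    by rewrite nth_index ?childpar // EXws // parS.
  - case => [[i|j]|] /=; last by rewrite /phi eqxx.
      have Hi : i < size s by rewrite Hn.
      have Hn' : nth c s i \in s := mem_nth c Hi.
      have Hc : e c (nth c s i) by rewrite -Hs.
      rewrite /phi; case: eqP => [E|_]; first by move: Hc; rewrite E eirr.
      by rewrite Hc index_uniq // inord_val.
    have Hj : j < m0 by rewrite Hm.
    have Hx := nthXw _ Hj.
    move: (Hx); rewrite HXw => /andP[H1 H2]; case/andP: (childP _ H2) => H3 H4.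
    have H5 := childY _ H1 H3.
    rewrite /phi (negbTE H4) (negbTE H5) parchild // index_uniq ?inord_val //.
    by rewrite (leq_trans Hj).
move=> x y; rewrite /phi.
case: (eqVneq x c) => [->|Nx]; case: (eqVneq y c) => [->|Ny] /=; rewrite ?eirr //.
- by case: (e c y).
- by rewrite esym; case: (e c x).
case Hx: (e c x); case Hy: (e c y) => /=.
- by apply/negbTE/negP => Hxy; apply: (noTri Hx Hxy); rewrite esym.
- have Hy' : ~~ e c y by rewrite Hy.
  have I1 : index x s < n'.+1 by rewrite -Hn index_mem Hs.
  have I2 : index (par y) s < m'.+1 by rewrite -Hm; apply: idxXw; apply: parS.
  rewrite !inordK //.
  rewrite index_eq ?Hs //; last by case/andP: (parP _ Ny Hy').
  apply/idP/eqP => [Hxy|->]; first exact: parU.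
  by case/andP: (parP _ Ny Hy').
- have Hx' : ~~ e c x by rewrite Hx.
  have I1 : index y s < n'.+1 by rewrite -Hn index_mem Hs.
  have I2 : index (par x) s < m'.+1 by rewrite -Hm; apply: idxXw; apply: parS.
  rewrite !inordK //.
  rewrite index_eq ?Hs //; last by case/andP: (parP _ Nx Hx').
  rewrite esym; apply/idP/eqP => [Hxy|->]; first exact: parU.
  by case/andP: (parP _ Nx Hx').
- have Hx' : ~~ e c x by rewrite Hx.
  have Hy' : ~~ e c y by rewrite Hy.
  apply/negbTE/negP => Hxy.
  case/andP: (parP _ Nx Hx') => H1 H2; case/andP: (parP _ Ny Hy') => H3 H4.
  have H4' : e y (par y) by rewrite esym.
  have H3' : e (par y) c by rewrite esym.
  apply: (noPent H1 H2 Hxy H4' H3').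
  + by rewrite eq_sym.
  + by apply/eqP => E; move: Hy'; rewrite -E H1.
  + by apply/eqP => E; move: Hx'; rewrite E H3.
Qed.

End Tree.


Theorem corollary3p12 (V : finType) (e : rel V) :
  is_tree e -> 2 <= #|V| ->
  (chordal (compl (square e)) <->
   [\/ exists n, 2 <= n <= 5 /\ isomorphic e (path_graph n),
       exists t, 1 <= t /\ isomorphic e (star_graph t)
     | exists n m, [/\ 1 <= n, 1 <= m, m <= n & isomorphic e (wstar_graph n m)]]).
Proof.
move=> [[Hsym Hirr] [Hconn Hacyc]] Hcard.
have [v0 _] : exists v0 : V, true.
  case: (pickP (@predT V)) => [v0 _|H]; first by exists v0.
  by move: Hcard; rewrite (eq_card0 H).
split.
- move=> Hch.
  have [c Hc] := cov_exists Hsym Hirr Hacyc Hch v0 Hconn.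
  have [g [Hg1 Hg2]] := good_exists Hsym Hirr Hacyc Hch Hc.
  have Hne : exists v, v != g.
    case: (pickP (fun v => v != g)) => [v Hv|H]; first by exists v.
    have : #|V| <= #|pred1 g|.
      apply: subset_leq_card; apply/subsetP => v _.
      by move: (H v); rewrite /= inE => /negbFE.
    by rewrite card1 leqNgt Hcard.
  case: (boolP [forall v, (v == g) || e g v]) => [/forallP H|H].
    by apply: Or32; apply: (star_build Hsym Hirr Hacyc H Hne).
  apply: Or33; apply: (wstar_build Hsym Hirr Hacyc Hg1 Hg2).
  move: H; rewrite negb_forall => /existsP[w]; rewrite negb_or => Hw; by exists w.
- case => [[n [Hn Hiso]]|[t [Ht Hiso]]|[n [m [_ _ _ Hiso]]]].
  + by case: (path_split Hn) => P [H1 H2]; apply: (chordal_iso Hiso H1 H2).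
  + by apply: (chordal_iso (P:=pred0) Hiso) => x y; rewrite star_far.
  + exact: (chordal_iso Hiso (@wstar_split1 n m) (@wstar_split2 n m)).
Qed.
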